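(* Let $T$ be RC-viable with respect to $S$. Then one of the following holds: (i) there is an edge $(u,v)$ of $T_{H(S)}$, with $v$ the parent of $u$, that satisfies the reaching criterion; or (ii) $T$ is recursively self-sufficient; in particular $V$ can be partitioned into subtrees $Q_s$, $s\in S$, with $s\in Q_s$ and $f(Q_s,s)\le\mathcal{T}$.
   Context: Let $T_{\mathrm{in}}=(V_{\mathrm{in}},E_{\mathrm{in}})$ be a finite tree; subtrees are identified with their vertex sets. $f:2^{V_{\mathrm{in}}}\times V_{\mathrm{in}}\to[0,+\infty]$ is minmax monotone: (1) $f(\{s\},s)=0$, and $f(U,s)=+\infty$ if $U$ is not a subtree or $s\notin U$; (2) $s\in U_1\subseteq U_2\Rightarrow f(U_1,s)\le f(U_2,s)$; (3) if $U$ is a subtree, $s\notin U$, and $s$ is adjacent to $u\in U$, then $f(U\cup\{s\},s)\ge f(U,u)$; (4) if $U$ is a subtree, $s\in U$, and $U_1,\dots,U_t$ are the vertex sets of the components of the tree induced by $U$ minus $s$, then $f(U,s)=\max_i f(U_i\cup\{s\},s)$. Fix $\mathcal{T}\ge0$. $T=(V,E)$ is a subtree of $T_{\mathrm{in}}$ and $S\subseteq V$ a set of leaves of $T$ with $|S|\ge2$, $|V|>2$. For an edge $(u,v)$, $T_{-v}(u)$ is the component of $T-v$ containing $u$, with vertex set $V_{-v}(u)$. Hub tree: $V_{H(S)}$ is the union of the vertex sets of the paths in $T$ between all pairs of sinks in $S$; $T_{H(S)}$ is the subtree induced by $V_{H(S)}$, and $T$ is rooted at a non-sink vertex $r\in V_{H(S)}$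 such that at least two of the components of $T-r$ contain sinks; for $w\in V$, $T(w)=(V(w),E(w))$ is the subtree consisting of $w$ and its descendants (so $T(r)=T$). If $w\in V_{H(S)}$ and $\eta\notin V_{H(S)}$ is a neighbour of $w$, then $T_{-w}(\eta)$ is an outstanding branch attached to $w$. $T$ is RC-viable with respect to $S$ if for every outstanding branch with vertex set $V'$ attached to $w\in V_{H(S)}$, $f(V'\cup\{w\},w)\le\mathcal{T}$. $\mathrm{BP}(a,a)$, for $a\in V_{H(S)}$, is $a$ together with the vertices of all outstanding branches attached to $a$. A subtree $T'$ with vertex set $V'$ is self-sufficient if $V'$ can be partitioned into subtrees $Q_s$, $s\in S\cap V'$, with $s\in Q_s$ and $f(Q_s,s)\le\mathcal{T}$. $T(v)$ ($v\in V_{H(S)}$) is recursively self-sufficient if $T(w)$ is self-sufficient for every $w\in V_{H(S)}\cap V(v)$; $T$ is recursively self-sufficient if $T(r)$ is. The ordered pair $(u,v)\in V_{H(S)}\times V_{H(S)}$ satisfies the reaching criterion if $v$ is the parent of $u$ in $T_{H(S)}$, $T_{-v}(u)$ is self-sufficient, and the subtree induced by $\mathrm{BP}(v,v)\cup V_{-v}(u)$ is not self-sufficient. *)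

(* Defs.v *)
From HB Require Import structures.
From mathcomp Require Import all_boot all_order all_algebra.
Set Implicit Arguments. Unset Strict Implicit. Unset Printing Implicit Defensive.
Import Order.TTheory GRing.Theory Num.Theory.
Local Open Scope ring_scope.

(* ---------- extended nonnegative values [0,+oo] : None = +oo ---------- *)
Definition ext (R : realFieldType) := option R.

Definition ele (R : realFieldType) (a b : ext R) : bool :=
  match a, b with
  | _, None => true
  | None, Some _ => false
  | Some x, Some y => x <= y
  end.

Definition emax (R : realFieldType) (a b : ext R) : ext R :=
  match a, b with
  | None, _ => None
  | _, None => None
  | Some x, Some y => Some (Num.max x y)
  end.

Section Graph.
Variables (VT : finType) (e : rel VT).

Definition restrict (W : {set VT}) : rel VT :=
  [rel a b | [&& a \in W, b \in W & e a b]].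

Definition is_tree : Prop :=
  [/\ symmetric e, irreflexive e, (forall x y, connect e x y) &
      (forall x p, (2 <= size p)%N -> path e x p -> uniq (x :: p) -> ~~ e (last x p) x)].

Definition subtree (U : {set VT}) : bool :=
  (U != set0) && [forall x in U, forall y in U, connect (restrict U) x y].

Definition comp (W : {set VT}) (x : VT) : {set VT} :=
  [set y in W | connect (restrict W) x y].

Definition components (W : {set VT}) : {set {set VT}} :=
  [set comp W x | x in W].

Definition on_path (V : {set VT}) (x y z : VT) : Prop :=
  exists p : seq VT,
    [&& path (restrict V) x p, last x p == y, uniq (x :: p) & z \in x :: p].

Definition leaf (V : {set VT}) (s : VT) : bool :=
  (s \in V) && (#|[set y in V | e s y]| == 1)%N.

Definition minmax_monotone (R : realFieldType) (f : {set VT} -> VT -> ext R) : Prop :=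
  (forall U s, ele (Some 0) (f U s)) /\
  [/\ (forall s, f [set s] s = Some 0),
      (forall U s, ~~ subtree U || (s \notin U) -> f U s = None),
      (forall U1 U2 s, subtree U1 -> subtree U2 -> s \in U1 -> U1 \subset U2 ->
          ele (f U1 s) (f U2 s)),
      (forall U s u, subtree U -> s \notin U -> u \in U -> e s u ->
          ele (f U u) (f (s |: U) s))
    & (forall U s, subtree U -> s \in U ->
          f U s = \big[@emax R / Some 0]_(C in components (U :\ s)) f (s |: C) s)].

Section Hub.
Variables (V S : {set VT}).

Definition hub (z : VT) : Prop :=
  exists s s', [/\ s \in S, s' \in S, s != s' & on_path V s s' z].

Definition good_root (r : VT) : Prop :=
  [/\ r \in V, r \notin S, hub r &
      exists C1 C2, [/\ C1 \in components (V :\ r), C2 \in components (V :\ r), C1 != C2,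
                       C1 :&: S != set0 & C2 :&: S != set0]].

Variable r : VT.

Definition parent (v u : VT) : Prop :=
  [/\ u \in V, v \in V, e u v & on_path V u r v].

(* vertex set V(w) of the subtree T(w) (w and its descendants) *)
Definition desc (w : VT) (x : VT) : Prop := x \in V /\ on_path V x r w.

Definition BP (a : VT) (x : VT) : Prop :=
  x = a \/ exists eta, [/\ eta \in V, e a eta, ~ hub eta & x \in comp (V :\ a) eta].

Definition rc_viable (R : realFieldType) (f : {set VT} -> VT -> ext R) (Tm : R) : Prop :=
  forall w eta, hub w -> eta \in V -> e w eta -> ~ hub eta ->
    ele (f (w |: comp (V :\ w) eta) w) (Some Tm).

Definition self_sufficient (R : realFieldType) (f : {set VT} -> VT -> ext R) (Tm : R)
    (P : VT -> Prop) : Prop :=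
  exists Q : VT -> {set VT},
    [/\ (forall s, s \in S -> P s ->
           [/\ subtree (Q s), s \in Q s & ele (f (Q s) s) (Some Tm)]),
        (forall s s', s \in S -> P s -> s' \in S -> P s' -> s != s' ->
           [disjoint Q s & Q s'])
      & (forall x, P x <-> exists s, [/\ s \in S, P s & x \in Q s])].

Definition recursively_self_sufficient (R : realFieldType) (f : {set VT} -> VT -> ext R)
    (Tm : R) : Prop :=
  forall w, hub w -> desc r w -> self_sufficient f Tm (desc w).

Definition reaching (R : realFieldType) (f : {set VT} -> VT -> ext R) (Tm : R)
    (u v : VT) : Prop :=
  [/\ hub u, hub v, parent v u,
      self_sufficient f Tm (fun x => x \in comp (V :\ v) u)
    & ~ self_sufficient f Tm (fun x => BP v x \/ x \in comp (V :\ v) u)].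

End Hub.
End Graph.

(* Main.v *)
Require Import Defs.
From HB Require Import structures.
From mathcomp Require Import all_boot all_order all_algebra.
Import Order.TTheory GRing.Theory Num.Theory.
From Stdlib Require Import Classical ClassicalEpsilon.
Set Implicit Arguments. Unset Strict Implicit. Unset Printing Implicit Defensive.

Lemma disjP (T : finType) (A B : {set T}) :
  (forall x, x \in A -> x \in B -> False) -> [disjoint A & B].
Proof.
move=> H; apply/pred0P => x /=; apply/negbTE/negP => /andP[]; exact: H.
Qed.

Section Comb.
Variables (VT : finType) (e : rel VT) (S : {set VT}) (R : realFieldType)
  (f : {set VT} -> VT -> ext R) (Tm : R).

Definition ssQ (P : VT -> Prop) (Q : VT -> {set VT}) :=
    [/\ (forall s, s \in S -> P s ->
           [/\ subtree e (Q s), s \in Q s & ele (f (Q s) s) (Some Tm)]),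
        (forall s s', s \in S -> P s -> s' \in S -> P s' -> s != s' ->
           [disjoint Q s & Q s'])
      & (forall x, P x <-> exists s, [/\ s \in S, P s & x \in Q s])].

Lemma ssE P : self_sufficient e S f Tm P <-> exists Q, ssQ P Q.
Proof. by []. Qed.

Lemma ss_ext (P P' : VT -> Prop) : (forall x, P x <-> P' x) ->
  self_sufficient e S f Tm P -> self_sufficient e S f Tm P'.
Proof.
move=> H [Q [H1 H2 H3]]; exists Q; split.
- by move=> s sS /H; apply: H1.
- by move=> s s' sS /H Ps s'S /H Ps'; apply: H2.
- move=> x; rewrite -H H3; split=> [[s [sS /H Ps xQ]]|[s [sS /H Ps xQ]]]; by exists s.
Qed.

Lemma combine (D X0 Ch : VT -> Prop) (C : VT -> VT -> Prop) (g : VT -> VT) :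
  self_sufficient e S f Tm X0 ->
  (forall a, Ch a -> self_sufficient e S f Tm (C a)) ->
  (forall x, D x <-> X0 x \/ (Ch (g x) /\ C (g x) x)) ->
  (forall x, X0 x -> Ch (g x) -> C (g x) x -> False) ->
  (forall x a, Ch a -> C a x -> g x = a) ->
  self_sufficient e S f Tm D.
Proof.
move=> [Q0 [A1 A2 A3]] HC HD Hdis Hdet.
have Hc : forall a, exists Qa, Ch a -> ssQ (C a) Qa.
  move=> a; case: (classic (Ch a)) => ha.
    by case: (HC a ha) => Qa HQa; exists Qa.
  by exists (fun _ => set0).
pose Qc a := proj1_sig (constructive_indefinite_description _ (Hc a)).
have Qc_spec : forall a, Ch a -> ssQ (C a) (Qc a).
  by move=> a; exact: (proj2_sig (constructive_indefinite_description _ (Hc a))).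
pose Q s := if excluded_middle_informative (X0 s) then Q0 s else Qc (g s) s.
have QX : forall s, X0 s -> Q s = Q0 s.
  by move=> s hs; rewrite /Q; case: excluded_middle_informative.
have QN : forall s, ~ X0 s -> Q s = Qc (g s) s.
  by move=> s hs; rewrite /Q; case: excluded_middle_informative.
have Q0X : forall s x, s \in S -> X0 s -> x \in Q0 s -> X0 x.
  by move=> s x sS hs xQ; apply/A3; exists s.
have QcC : forall a s x, Ch a -> s \in S -> C a s -> x \in Qc a s -> C a x.
  move=> a s x ha sS hs xQ; case: (Qc_spec a ha) => _ _ B3; apply/B3; by exists s.
exists Q; split.
- move=> s sS /HD [hs|[hc hs]]; first by rewrite QX //; apply: A1.
  have nx : ~ X0 s by move=> hx; apply: (Hdis s).
  by rewrite QN //; case: (Qc_spec _ hc) => B1 _ _; apply: B1.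
- move=> s s' sS /HD Ds s'S /HD Ds' ss'.
  case: (classic (X0 s)) => hs; case: (classic (X0 s')) => hs'.
  + by rewrite !QX //; apply: A2.
  + case: Ds' => [//|[hc hc']]; rewrite (QX s) // (QN s') //.
    apply: disjP => x x1 x2.
    have cx := QcC _ _ _ hc s'S hc' x2.
    have gx := Hdet _ _ hc cx; apply: (Hdis x (Q0X _ _ sS hs x1)); by rewrite gx.
  + case: Ds => [//|[hc hc']]; rewrite (QN s) // (QX s') //.
    apply: disjP => x x1 x2.
    have cx := QcC _ _ _ hc sS hc' x1.
    have gx := Hdet _ _ hc cx; apply: (Hdis x (Q0X _ _ s'S hs' x2)); by rewrite gx.
  + case: Ds => [//|[hc hc']]; case: Ds' => [//|[kc kc']]; rewrite !QN //.
    case: (eqVneq (g s) (g s')) => gg.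
      rewrite -gg; case: (Qc_spec _ hc) => _ B2 _; apply: B2 => //; by rewrite gg.
    apply: disjP => x x1 x2.
    have e1 := Hdet _ _ hc (QcC _ _ _ hc sS hc' x1).
    have e2 := Hdet _ _ kc (QcC _ _ _ kc s'S kc' x2).
    by move: gg; rewrite -e1 -e2 eqxx.
- move=> x; split.
    move/HD => [hx|[hc hx]].
      case/A3: hx => s [sS hs xQ]; exists s; split=> //; first by apply/HD; left.
      by rewrite QX.
    case: (Qc_spec _ hc) => _ _ B3; case/B3: hx => s [sS hs xQ].
    have gs := Hdet _ _ hc hs.
    have ns : ~ X0 s by move=> h; apply: (Hdis s h); rewrite gs.
    exists s; split=> //; first by apply/HD; right; rewrite gs.
    by rewrite QN // gs.
  move=> [s [sS /HD Ds xQ]]; apply/HD.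
  case: (classic (X0 s)) => hs.
    by left; apply: (Q0X s) => //; rewrite -QX.
  case: Ds => [//|[hc hs']]; right.
  rewrite QN // in xQ; have cx := QcC _ _ _ hc sS hs' xQ.
  by rewrite (Hdet _ _ hc cx).
Qed.
End Comb.
Section Tree.
Variables (VT : finType) (e : rel VT).
Hypotheses (esym : symmetric e) (eirr : irreflexive e)
  (econn : forall x y, connect e x y)
  (nocyc : forall x p, (2 <= size p)%N -> path e x p -> uniq (x :: p) -> ~~ e (last x p) x).

Definition up x p y := [&& path e x p, last x p == y & uniq (x :: p)].

Lemma path_sym x p : path e (last x p) (rev (belast x p)) = path e x p.
Proof.
rewrite rev_path; apply: eq_path => a b; exact: esym.
Qed.

Lemma no_cycle x a b r : e x a -> e x b -> a != b -> path e a r -> last a r = b ->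
  x \notin a :: r -> False.
Proof.
move=> xa xb ab pr; move: (shortenP pr) => [p' pp' up' sub] lp' xr.
have nz : p' != [::] by apply/eqP => p0; move: lp' ab; rewrite p0 /= => ->; rewrite eqxx.
have xn : x \notin a :: p'.
  rewrite inE; apply/negP => /orP[/eqP xa'|/sub xr']; move: xr; rewrite inE.
    by rewrite xa' eqxx.
  by rewrite xr' orbT.
have := nocyc (x := x) (p := a :: p').
have sz : (2 <= size (a :: p'))%N by case: p' nz {pp' up' sub lp' xn}.
move/(_ sz); rewrite /= xa pp' lp' -(esym x b) xb /=.
have U : uniq [:: x, a & p'] by rewrite /= xn.
by move/(_ isT U).
Qed.

Lemma up_unique x p q y : up x p y -> up x q y -> p = q.
Proof.
elim: p x q => [|a p IH] x [|b q] //=.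
- move=> /and3P[_ /eqP /= ey _] /and3P[_ /eqP /= lq uq]; subst y.
  exfalso; move: uq; rewrite /= -{1}lq.
  by rewrite (mem_last b q).
- move=> /and3P[_ /eqP /= lp uq] /and3P[_ /eqP /= lq _].
  exfalso; move: uq; rewrite /= lq -{1}lp.
  by rewrite (mem_last a p).
move=> /and3P[/andP[xa pa] /eqP /= lp /andP[xap uap]] /and3P[/andP[xb pb] /eqP /= lq /andP[xbq ubq]].
case: (eqVneq a b) => [ab|ab].
  subst b; congr (_ :: _); apply: (IH a); apply/and3P; split=> //; apply/eqP=> //.
exfalso; apply: (no_cycle xa xb ab (r := p ++ rev (belast b q))).
- rewrite cat_path; apply/andP; split=> //; rewrite lp -lq path_sym //.
- rewrite last_cat lp -lq; case: q {pb lq xbq ubq} => //= c q.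
  by rewrite rev_cons last_rcons.
- rewrite -cat_cons mem_cat negb_or xap /= mem_rev.
  apply/negP => /mem_belast; exact/negP.
Qed.

Lemma ex_up x y : exists p, up x p y.
Proof.
move: (econn x y) => /connectP[p pp ->].
move: (shortenP pp) => [p' pp' up' _]; exists p'; by rewrite /up pp' eqxx up'.
Qed.

Definition tp x y := xchoose (ex_up x y).
Lemma tpP x y : up x (tp x y) y.
Proof. exact: (xchooseP (ex_up x y)). Qed.
Lemma tp_eq x p y : up x p y -> tp x y = p.
Proof. by move=> h; apply: up_unique (tpP x y) h. Qed.

Lemma tp_path x y : path e x (tp x y). Proof. by case/and3P: (tpP x y). Qed.
Lemma tp_last x y : last x (tp x y) = y. Proof. by case/and3P: (tpP x y) => _ /eqP. Qed.
Lemma tp_uniq x y : uniq (x :: tp x y). Proof. by case/and3P: (tpP x y). Qed.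

Lemma tp_self x : tp x x = [::].
Proof. by apply: tp_eq; rewrite /up /= eqxx. Qed.

Lemma tp_adj x y : e x y -> tp x y = [:: y].
Proof.
move=> xy; apply: tp_eq; rewrite /up /= xy eqxx /= inE andbT.
by apply/eqP => exy; move: xy; rewrite exy eirr.
Qed.

Lemma tp_nil x y : tp x y = [::] -> x = y.
Proof. by move=> h; have := tp_last x y; rewrite h. Qed.

Lemma tp_rev x y : rev (x :: tp x y) = y :: tp y x.
Proof.
rewrite lastI rev_rcons tp_last; congr (_ :: _); symmetry; apply: tp_eq.
apply/and3P; split.
- by rewrite -{1}(tp_last x y) path_sym tp_path.
- case: (tp x y) (tp_last x y) => [|c q] /= Hl; first by rewrite Hl.
  by rewrite rev_cons last_rcons.
- have := tp_uniq x y; have := tp_last x y; set p := tp x y => <-.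
  by rewrite -rev_rcons rev_uniq -lastI.
Qed.

Definition B x z y := z \in x :: tp x y.

Lemma B_sym x z y : B x z y -> B y z x.
Proof. by rewrite /B -tp_rev mem_rev. Qed.

Lemma B_left x y : B x x y. Proof. exact: mem_head. Qed.
Lemma B_right x y : B x y y.
Proof. by rewrite /B -{1}(tp_last x y) mem_last. Qed.

Lemma tp_split x z y : B x z y -> tp x y = tp x z ++ tp z y.
Proof.
rewrite /B inE => /orP[/eqP ->|]; first by rewrite tp_self.
move: (tpP x y); set p := tp x y => hup zp.
case/path.splitP: zp hup => p1 p2 /and3P[pp /eqP lp up'].
rewrite (tp_eq (x := x) (p := rcons p1 z) (y := z)); last first.
  apply/and3P; split.
  - by move: pp; rewrite cat_path => /andP[].
  - by rewrite last_rcons.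
  - by move: up'; rewrite -cat_cons cat_uniq => /andP[].
rewrite (tp_eq (x := z) (p := p2) (y := y)) //.
apply/and3P; split.
- by move: pp; rewrite cat_path last_rcons => /andP[].
- by rewrite -lp last_cat last_rcons.
- by move: up'; rewrite cat_rcons -cat_cons cat_uniq => /and3P[_ _].
Qed.

Lemma tp_join x z y : uniq (x :: tp x z ++ tp z y) -> tp x y = tp x z ++ tp z y.
Proof.
move=> u; apply: tp_eq; apply/and3P; split=> //.
- by rewrite cat_path tp_path tp_last tp_path.
- by rewrite last_cat tp_last tp_last.
Qed.

Lemma B_join x z y : uniq (x :: tp x z ++ tp z y) -> B x z y.
Proof.
move=> u; rewrite /B (tp_join u) -cat_cons mem_cat -{1}(tp_last x z) mem_last //.
Qed.

Definition nb w x := head w (tp w x).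

Lemma tp_cons w x : x != w -> tp w x = nb w x :: behead (tp w x).
Proof.
move=> xw; rewrite /nb; case h: (tp w x) => [|a q] //=.
by move: xw; rewrite (tp_nil h) eqxx.
Qed.

Lemma nb_adj w x : x != w -> e w (nb w x).
Proof. move=> xw; have := tp_path w x; rewrite (tp_cons xw) /= => /andP[] //. Qed.

Lemma nb_in w x : x != w -> nb w x \in tp w x.
Proof. by move=> xw; rewrite (tp_cons xw) mem_head. Qed.

Lemma nb_B w z x : B w z x -> z != w -> nb w z = nb w x.
Proof.
move=> bz zw; rewrite /nb (tp_split bz) (tp_cons zw) //.
Qed.

Lemma nb_self_adj w a : e w a -> nb w a = a.
Proof. by move=> wa; rewrite /nb tp_adj. Qed.

Lemma junction x w y : x != w -> y != w -> nb w x != nb w y -> B x w y.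
Proof.
move=> xw yw nxy; apply: B_join; rewrite -cat_cons cat_uniq tp_uniq.
have := tp_uniq w y; rewrite /= => /andP[wy ->]; rewrite andbT.
apply/hasPn => z zy; apply/negP => zx.
have zw : z != w by apply/eqP => zw; subst z; rewrite zy in wy.
have h1 : nb w z = nb w y by apply: nb_B; rewrite // /B inE zy orbT.
have h2 : nb w z = nb w x by apply: nb_B => //; apply: B_sym.
by move: nxy; rewrite -h1 -h2 eqxx.
Qed.

Lemma junction_conv x w y : B x w y -> x != w -> y != w -> nb w x != nb w y.
Proof.
move=> bw xw yw; apply/eqP => h.
have := tp_uniq x y; rewrite (tp_split bw) -cat_cons cat_uniq => /and3P[_ /hasPn H _].
have a1 : nb w y \in tp w y by apply: nb_in.
have a2 : nb w x \in x :: tp x w by rewrite -mem_rev tp_rev inE nb_in ?orbT.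
by move: (H _ a1); rewrite -h a2.
Qed.

Lemma junction_iff x w y : x != w -> y != w -> B x w y = (nb w x != nb w y).
Proof.
move=> xw yw; apply/idP/idP => h; [exact: junction_conv h xw yw | exact: junction xw yw h].
Qed.


Lemma rpath_e (W : {set VT}) a s : path (restrict e W) a s -> path e a s.
Proof. by apply: sub_path => u v /and3P[]. Qed.

Lemma rpath_all (W : {set VT}) a s : path (restrict e W) a s -> all (mem W) s.
Proof.
elim: s a => //= b s IH a /andP[/and3P[_ bW _] ps]; rewrite bW /=; exact: IH ps.
Qed.

Lemma e_rpath (W : {set VT}) a s : a \in W -> path e a s -> all (mem W) s -> path (restrict e W) a s.
Proof.
elim: s a => //= b s IH a aW /andP[ab ps] /andP[bW aS].
apply/andP; split; first by rewrite /restrict /= aW bW ab.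
exact: IH.
Qed.

Variable V : {set VT}.
Hypothesis Vconn : forall x y, x \in V -> y \in V -> connect (restrict e V) x y.

Lemma tpV x y : x \in V -> y \in V -> path (restrict e V) x (tp x y).
Proof.
move=> xV yV; move: (Vconn xV yV) => /connectP[p pp ->].
move: (shortenP pp) => [p' pp' up' _].
by rewrite (tp_eq (p := p')) // /up (rpath_e pp') eqxx up'.
Qed.

Lemma tpV_mem x y z : x \in V -> y \in V -> z \in x :: tp x y -> z \in V.
Proof.
move=> xV yV; rewrite inE => /orP[/eqP -> //|].
by move: (rpath_all (tpV xV yV)) => /allP H /H.
Qed.

Lemma onpath_iff x y z : x \in V -> y \in V -> on_path e V x y z <-> B x z y.
Proof.
move=> xV yV; split.
  case=> p /and4P[pp /eqP lp up' zp].
  by rewrite /B (tp_eq (p := p)) // /up (rpath_e pp) lp eqxx up'.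
move=> bz; exists (tp x y); rewrite tpV // tp_last eqxx tp_uniq; exact: bz.
Qed.

Lemma comp_iff w a x : w \in V -> a \in V -> e w a ->
  (x \in Defs.comp e (V :\ w) a) = [&& x \in V, x != w & nb w x == a].
Proof.
move=> wV aV wa.
have aw : a != w by apply/eqP => aw; move: wa; rewrite aw eirr.
rewrite /Defs.comp inE in_setD1; apply/andP/and3P.
  case=> /andP[xw xV] /connectP[p pp lp]; split=> //.
  move: lp; move: (shortenP pp) => [p' pp' up' _] lp'.
  rewrite /nb (tp_eq (p := a :: p')) //.
  rewrite /up /= wa (rpath_e pp') -lp' eqxx /=.
  move: up'; rewrite /= => /andP[-> ->]; rewrite !andbT.
  rewrite inE negb_or eq_sym aw /=.
  move: (rpath_all pp') => /allP H; apply/negP => /H; rewrite /= !inE eqxx //.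
case=> xV xw /eqP nbx; split; first by rewrite xw xV.
have hc := tp_cons xw; rewrite nbx in hc.
have ha : tp a x = behead (tp w x).
  apply: tp_eq; have := tpP w x; rewrite hc /up /= => /and3P[/andP[_ ->] -> /andP[_ ->]].
  by [].
apply/connectP; exists (tp a x); last by rewrite tp_last.
apply: e_rpath; first by rewrite in_setD1 aw.
  exact: tp_path.
apply/allP => z zq; rewrite /= !inE; apply/andP; split.
  apply/eqP => zw; subst z; move: (tp_uniq w x); rewrite hc -ha /= inE zq orbT //.
apply: (tpV_mem wV xV); rewrite hc -ha inE inE zq !orbT //.
Qed.


Lemma B_sub a y b z : B a y b -> B a z y -> B a z b.
Proof.
move=> hy; rewrite /B (tp_split hy) -cat_cons mem_cat => ->; by [].
Qed.

Lemma nb_const a y b z : B a y b -> ~~ B a z b -> nb z y = nb z a.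
Proof.
move=> hy hz.
have yz : y != z by apply/eqP => yz; subst y; rewrite hy in hz.
have az : a != z by apply/eqP => az; subst a; rewrite B_left in hz.
apply/eqP; apply/negPn/negP => /(junction yz az) /B_sym h.
by rewrite (B_sub hy h) in hz.
Qed.

Variable S : {set VT}.
Definition hubB z := exists s s', [/\ s \in S, s' \in S, s != s' & B s z s'].

Lemma hub_convex w r z : hubB w -> hubB r -> B w z r -> hubB z.
Proof.
move=> [s1 [s2 [s1S s2S s12 b1]]] [s3 [s4 [s3S s4S s34 b3]]] bz.
case: (boolP (B s1 z s2)) => h1; first by exists s1, s2.
case: (boolP (B s3 z s4)) => h3; first by exists s3, s4.
have wz : w != z by apply/eqP => wz; subst w; rewrite b1 in h1.
have rz : r != z by apply/eqP => rz; subst r; rewrite b3 in h3.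
have n1 := nb_const b1 h1; have n3 := nb_const b3 h3.
have s1z : s1 != z by apply/eqP => sz; subst s1; rewrite B_left in h1.
have s3z : s3 != z by apply/eqP => sz; subst s3; rewrite B_left in h3.
have := junction_conv bz wz rz; rewrite n1 n3 => nn.
exists s1, s3; split=> //; last exact: junction.
by apply/eqP => e13; subst s3; rewrite eqxx in nn.
Qed.

Variable r : VT.
Hypotheses (SV : S \subset V) (leafS : forall s, s \in S -> leaf e V s)
  (rV : r \in V) (rS : r \notin S) (hubr : hubB r).

Definition descb w := [set x in V | (x == w) || (w == r) || (nb w x != nb w r)].

Lemma desc_iff w x : w \in V -> desc e V r w x <-> x \in descb w.
Proof.
move=> wV; rewrite /desc /descb inE; split.
  case=> xV /(onpath_iff w xV rV) bw; rewrite xV /=.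
  case: (eqVneq x w) => //= xw; case: (eqVneq w r) => //= wr.
  by apply: junction_conv bw xw _; rewrite eq_sym.
case/andP => xV h; split=> //; apply/(onpath_iff w xV rV).
case: (eqVneq x w) h => [->|xw] /= h; first exact: B_left.
case: (eqVneq w r) h => [->|wr] /= h; first exact: B_right.
by apply: junction => //; rewrite eq_sym.
Qed.

Lemma SVm s : s \in S -> s \in V.
Proof. by move/(subsetP SV). Qed.

Lemma hub_iff z : hub e V S z <-> hubB z.
Proof.
split=> [[s [s' [sS s'S ss' op]]]|[s [s' [sS s'S ss' op]]]]; exists s, s';
  (split; [exact: sS|exact: s'S|exact: ss'|]).
  exact: (proj1 (onpath_iff z (SVm sS) (SVm s'S)) op).
exact: (proj2 (onpath_iff z (SVm sS) (SVm s'S)) op).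
Qed.

Lemma neq_adj a b : e a b -> a != b.
Proof. by move=> ab; apply/eqP => h; move: ab; rewrite h eirr. Qed.

Lemma parent_iff w a : w \in V -> a \in V -> e w a ->
  parent e V r w a <-> (w == r) || (a != nb w r).
Proof.
move=> wV aV wa; have aw : a != w by rewrite eq_sym neq_adj.
split.
  case=> _ _ _ /(onpath_iff w aV rV) bw.
  case: (eqVneq w r) => //= wr.
  have wr' : r != w by rewrite eq_sym.
by have := junction_conv bw aw wr'; rewrite (nb_self_adj wa).
move=> h; split; [exact: aV|exact: wV|by rewrite esym|].
apply/(onpath_iff w aV rV).
case: (eqVneq w r) h => [->|wr] /= h; first exact: B_right.
apply: junction => //; first by rewrite eq_sym.
by rewrite (nb_self_adj wa).
Qed.

Lemma child_comp w a x : w \in V -> a \in V -> e w a -> (w == r) || (a != nb w r) ->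
  (x \in descb a) = (x \in Defs.comp e (V :\ w) a).
Proof.
move=> wV aV wa hc; have aw : a != w by rewrite eq_sym neq_adj.
have ea : e a w by rewrite esym.
have bw : B a w r by apply/(onpath_iff w aV rV); case: (proj2 (parent_iff wV aV wa) hc).
have nar : nb a r = w by rewrite /nb (tp_split bw) (tp_adj ea).
have ar : a != r.
  apply/eqP => ar; subst a; move: bw; rewrite /B tp_self inE => /eqP wr.
  by move: wa; rewrite wr eirr.
rewrite comp_iff // /descb inE nar (negbTE ar) orbF.
case: (boolP (x \in V)) => //= xV.
case: (eqVneq x a) => [->|xa] /=; first by rewrite aw (nb_self_adj wa) eqxx.
case: (eqVneq (nb a x) w) => [nx|nx] /=.
  symmetry; apply/negbTE; apply/andP => [[xw /eqP nwx]].
  have bwa : B w a x by rewrite /B -nwx inE nb_in ?orbT.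
  have := tp_uniq w x; rewrite (tp_split bwa) (tp_adj wa) /= inE => /andP[H _].
  by move: H; rewrite -nx nb_in // orbT.
have wa' : w != a by rewrite eq_sym.
have bx : B x a w by apply: junction => //; rewrite (nb_self_adj ea).
have xw : x != w by apply/eqP => xw; subst x; rewrite (nb_self_adj ea) eqxx in nx.
by rewrite xw /= -(nb_B (B_sym bx)) // (nb_self_adj wa) eqxx.
Qed.

Lemma sink_desc s x : s \in S -> x \in descb s -> x = s.
Proof.
move=> sS; have sV := SVm sS; have sr : s != r by apply/eqP => sr; move: rS; rewrite -sr sS.
rewrite /descb inE (negbTE sr) orbF => /andP[xV].
case: (eqVneq x s) => //= xs nn; exfalso.
have rs : r != s by rewrite eq_sym.
have a1 : nb s x \in [set y in V | e s y].
  rewrite inE nb_adj // andbT; apply: (tpV_mem sV xV); rewrite inE nb_in ?orbT //.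
have a2 : nb s r \in [set y in V | e s y].
  rewrite inE nb_adj // andbT; apply: (tpV_mem sV rV); rewrite inE nb_in ?orbT //.
case/andP: (leafS sS) => _ /eqP c1.
have : (#|[set nb s x; nb s r]| <= #|[set y in V | e s y]|)%N.
  apply: subset_leq_card; apply/subsetP => y; rewrite !inE => /orP[] /eqP ->.
    by move: a1; rewrite inE.
  by move: a2; rewrite inE.
by rewrite cards2 nn c1.
Qed.

Lemma hub_child w : w \in V -> hubB w -> w \notin S ->
  exists a, [/\ a \in V, e w a, hubB a & (w == r) || (a != nb w r)].
Proof.
move=> wV [s [s' [sS s'S ss' bw]]] wS.
have sw : s != w by apply/eqP => h; subst s; rewrite sS in wS.
have s'w : s' != w by apply/eqP => h; subst s'; rewrite s'S in wS.
have nn := junction_conv bw sw s'w.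
have ha : forall t t', t \in S -> t' \in S -> t != t' -> B t w t' -> t' != w ->
    [/\ nb w t' \in V, e w (nb w t') & hubB (nb w t')].
  move=> t t' tS t'S tt' bt t'w; split.
  - apply: (tpV_mem wV (SVm t'S)); rewrite inE nb_in ?orbT //.
  - exact: nb_adj.
  - exists t, t'; split=> //; rewrite /B (tp_split bt) -cat_cons mem_cat nb_in ?orbT //.
have [a1 a2 a3] := ha s s' sS s'S ss' bw s'w.
have s's : s' != s by rewrite eq_sym.
have [b1 b2 b3] := ha s' s s'S sS s's (B_sym bw) sw.
case: (eqVneq w r) => [wr|wr].
  by exists (nb w s'); split=> //; rewrite wr eqxx.
case: (eqVneq (nb w s') (nb w r)) => h.
  by exists (nb w s); split=> //=; rewrite -h.
by exists (nb w s'); split=> //=; rewrite h.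
Qed.

Lemma in_descb w : w \in V -> w \in descb w.
Proof. by move=> wV; rewrite /descb inE wV eqxx. Qed.

Variables (R : realFieldType) (f : {set VT} -> VT -> ext R) (Tm : R).
Hypotheses (f1 : forall s, f [set s] s = Some 0%R) (Tm0 : (0 <= Tm)%R).

Lemma sink_ss w : w \in V -> w \in S -> self_sufficient e S f Tm (fun x => x \in descb w).
Proof.
move=> wV wS; exists (fun s => [set s]); split.
- move=> s sS _; split; last by rewrite f1.
  + rewrite /subtree; apply/andP; split; first by apply/set0Pn; exists s; rewrite inE.
    by apply/forallP => x; apply/implyP; rewrite inE => /eqP ->;
       apply/forallP => y; apply/implyP; rewrite inE => /eqP ->; exact: connect0.
  + by rewrite inE.
- move=> s s' sS /sink_desc -> // s'S /sink_desc -> //; by rewrite eqxx.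
- move=> x; split.
    by move=> hx; exists x; rewrite inE eqxx hx (sink_desc wS hx) wS.
  by case=> s [sS hs]; rewrite inE => /eqP ->.
Qed.

Hypothesis noreach : ~ exists u v, reaching e V S r f Tm u v.

Lemma main_ind n w : (#|descb w| < n)%N -> w \in V -> hubB w ->
  self_sufficient e S f Tm (fun x => x \in descb w).
Proof.
elim: n w => [//|n IH] w hn wV hw.
case: (boolP (w \in S)) => wS; first exact: sink_ss.
have [a0 [a0V wa0 ha0 hc0]] := hub_child wV hw wS.
pose Hch a := [/\ a \in V, e w a, hubB a & (w == r) || (a != nb w r)].
have Csub : forall a x, a \in V -> e w a -> (w == r) || (a != nb w r) ->
    x \in Defs.comp e (V :\ w) a -> x \in descb w.
  move=> a x aV wa hc.
  rewrite comp_iff // => /and3P[xV xw /eqP nx].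
  by rewrite /descb inE xV /= nx; case/orP: hc => ->; rewrite ?orbT.
have sch : forall a, Hch a -> self_sufficient e S f Tm (fun x => x \in Defs.comp e (V :\ w) a).
  move=> a [aV wa ha hc].
  apply: (ss_ext (P := fun x => x \in descb a)); first by move=> x; rewrite (child_comp x wV aV wa hc).
  have hlt : (#|descb a| < n)%N.
    rewrite ltnS in hn; apply: (leq_trans _ hn); apply: proper_card; apply/properP; split.
      by apply/subsetP => x; rewrite (child_comp x wV aV wa hc) => /Csub; apply.
    exists w; first exact: in_descb.
    by rewrite (child_comp w wV aV wa hc) comp_iff // eqxx andbF.
  exact: IH hlt aV ha.
pose X0 x := BP e V S w x \/ x \in Defs.comp e (V :\ w) a0.
have ss0 : self_sufficient e S f Tm X0.
  apply: NNPP => H; apply: noreach; exists a0, w; split.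
  - by apply/hub_iff.
  - by apply/hub_iff.
  - by apply/parent_iff.
  - by apply: sch.
  - exact: H.
have hnb : forall x, x != w -> x \in V -> nb w x \in V /\ e w (nb w x).
  move=> x xw xV; split; last exact: nb_adj.
  by apply: (tpV_mem wV xV); rewrite inE nb_in ?orbT.
have cnd : forall x, x \in descb w -> x != w -> (w == r) || (nb w x != nb w r).
  by move=> x; rewrite /descb inE => /andP[_]; case: (x == w).
have hnr : w != r -> hubB (nb w r).
  move=> wr; apply: (hub_convex hw hubr).
  by rewrite /B inE nb_in ?orbT // eq_sym.
apply: (@combine _ e S _ f Tm (fun x => x \in descb w) X0
          (fun a => Hch a /\ a != a0) (fun a x => x \in Defs.comp e (V :\ w) a) (nb w) ss0).
- by move=> a [ha _]; apply: sch.
- move=> x; split.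
  + move=> hx; case: (eqVneq x w) => xw.
      by left; rewrite /X0 /BP; left; left.
    have xV : x \in V by move: hx; rewrite /descb inE => /andP[].
    have [aV wa] := hnb x xw xV.
    have xc : x \in Defs.comp e (V :\ w) (nb w x) by rewrite comp_iff // xV xw eqxx.
    have hc := cnd x hx xw.
    case: (classic (hubB (nb w x))) => hh.
      case: (eqVneq (nb w x) a0) => ha.
        by left; rewrite /X0; right; rewrite -ha.
      right; split; last exact: xc.
      by split; [split|].
    left; rewrite /X0 /BP; left; right; exists (nb w x).
    split; [exact: aV|exact: wa| |exact: xc].
    by move/hub_iff.
  + move=> [[[->|[eta [eV we neh xc]]]|xc]|[[[aV wa ha hc] _] xc]].
    * exact: in_descb.
    * apply: (Csub eta x eV we) xc.
      apply/orP; case: (eqVneq w r) => wr; [by left|right].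
      apply/eqP => he; apply: neh; apply/hub_iff; rewrite he; exact: hnr wr.
    * exact: (Csub a0 x a0V wa0 hc0 xc).
    * exact: (Csub (nb w x) x aV wa hc xc).
- move=> x hX [[aV wa ha hc] na] xc.
  move: xc; rewrite comp_iff // => /and3P[xV xw _].
  case: hX => [[xe|[eta [eV we neh xc']]]|xc'].
  + by rewrite xe eqxx in xw.
  + move: xc'; rewrite comp_iff // => /and3P[_ _ /eqP he].
    by apply: neh; apply/hub_iff; rewrite -he.
  + move: xc'; rewrite comp_iff // => /and3P[_ _ /eqP he].
    by rewrite he eqxx in na.
- move=> x a [[aV wa _ _] _]; rewrite comp_iff // => /and3P[_ _ /eqP] //.
Qed.

Lemma no_reach_result :
  recursively_self_sufficient e V S r f Tm /\ self_sufficient e S f Tm (fun x => x \in V).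
Proof.
split.
  move=> w /hub_iff hw [wV _].
  apply: (ss_ext (P := fun x => x \in descb w)).
    by move=> x; split => /(desc_iff x wV).
  exact: (main_ind (n := #|descb w|.+1)).
apply: (ss_ext (P := fun x => x \in descb r)).
  by move=> x; rewrite /descb inE eqxx orbT andbT.
exact: (main_ind (n := #|descb r|.+1)).
Qed.
End Tree.

Local Open Scope ring_scope.

Theorem corollary3 (R : realFieldType) (VT : finType) (e : rel VT)
    (f : {set VT} -> VT -> ext R) (Tm : R) (V S : {set VT}) (r : VT) :
  is_tree e ->
  minmax_monotone e f ->
  0 <= Tm ->
  subtree e V ->
  S \subset V ->
  (forall s, s \in S -> leaf e V s) ->
  (2 <= #|S|)%N ->
  (2 < #|V|)%N ->
  good_root e V S r ->
  rc_viable e V S f Tm ->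
  (exists u v, reaching e V S r f Tm u v) \/
  (recursively_self_sufficient e V S r f Tm /\ self_sufficient e S f Tm (fun x => x \in V)).
Proof.
move=> [esym eirr econn nocyc] [_ [f1 _ _ _ _]] Tm0 /andP[_ /forallP Vc] SV leafS _ _
  [rV rS hr _] _.
have Vconn : forall x y, x \in V -> y \in V -> connect (restrict e V) x y.
  by move=> x y xV yV; move: (Vc x); rewrite xV /= => /forallP/(_ y); rewrite yV.
case: (classic (exists u v, reaching e V S r f Tm u v)) => H; [by left|right].
apply: (no_reach_result esym eirr nocyc Vconn SV leafS rV rS _ f1 Tm0 H).
exact: (proj1 (hub_iff esym econn nocyc Vconn SV r) hr).
Qed.
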